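(* Let $F$ be an algebraically closed field of characteristic different from $2$ and $3$, and let $K_{10}=F\cdot 1\oplus(K_3\otimes K_3)$ be the Kac Jordan superalgebra in the realization described in the context. Let $\varphi\colon K_{10}\to K_{10}$ be the automorphism $\varphi(\lambda 1+a\otimes b)=\lambda 1+(-1)^{\bar a\bar b}\,b\otimes a$ (for $\lambda\in F$ and homogeneous $a,b\in K_3$, extended linearly). Then the maximal subalgebras of $K_{10}$ are, up to conjugation by automorphisms of $K_{10}$, the following: (i) $(K_{10})_{\bar 0}$; (ii) the subalgebra of elements fixed by $\varphi$; (iii) the subalgebra $F\cdot 1\oplus(M\otimes K_3)$, where $M=Fe+Fx$ (a maximal subalgebra of $K_3$); (iv) the subalgebra $F\cdot 1+F(e\otimes e)+(x\otimes K_3)+(K_3\otimes y)$.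
   Context: The Kaplansky superalgebra $K_3$ has even part $Fe$ and odd part $Fx+Fy$, with products $e^2=e$, $ex=xe=\tfrac12x$, $ey=ye=\tfrac12y$, $xy=e$, $yx=-e$, $x^2=y^2=0$. It carries the supersymmetric bilinear form with $(e|e)=\tfrac12$, $(x|y)=1$, $(y|x)=-1$, $(x|x)=(y|y)=0$, and even and odd parts orthogonal. $K_{10}=F\cdot1\oplus(K_3\otimes K_3)$ is the superalgebra in which $1$ is an even identity element, $a\otimes b$ (for homogeneous $a,b\in K_3$) has parity $\bar a+\bar b$, and $(a\otimes b)(c\otimes d)=(-1)^{\bar b\bar c}\bigl(ac\otimes bd-\tfrac34(a|c)(b|d)1\bigr)$; this is (isomorphic to) the $10$-dimensional Kac Jordan superalgebra. Subalgebras are graded subalgebras; maximal means proper and maximal under inclusion; automorphisms are grading-preserving. *)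

(* Defs.v *)
From HB Require Import structures.
From mathcomp Require Import all_boot all_order all_algebra.
Set Implicit Arguments. Unset Strict Implicit. Unset Printing Implicit Defensive.
Import GRing.Theory.
Local Open Scope ring_scope.

(* ---------- The Kaplansky superalgebra K_3 via structure constants ----------
   Basis of K_3 indexed by 'I_3 :  0 = e (even),  1 = x (odd),  2 = y (odd). *)

Section K10.
Variable F : fieldType.

Definition p3 (i : 'I_3) : bool := (nat_of_ord i != 0%N).

(* m3 i j k = coefficient of basis_k in basis_i * basis_j (product of K_3):
   e^2=e, ex=xe=x/2, ey=ye=y/2, xy=e, yx=-e, x^2=y^2=0 *)
Definition m3 (i j k : 'I_3) : F :=
  match nat_of_ord i, nat_of_ord j, nat_of_ord k with
  | O, O, O => 1
  | O, S O, S O => 2%:R^-1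
  | S O, O, S O => 2%:R^-1
  | O, S (S O), S (S O) => 2%:R^-1
  | S (S O), O, S (S O) => 2%:R^-1
  | S O, S (S O), O => 1
  | S (S O), S O, O => -1
  | _, _, _ => 0
  end.

(* the supersymmetric bilinear form on K_3:
   (e|e)=1/2, (x|y)=1, (y|x)=-1, all other pairs of basis elements 0 *)
Definition f3 (i j : 'I_3) : F :=
  match nat_of_ord i, nat_of_ord j with
  | O, O => 2%:R^-1
  | S O, S (S O) => 1
  | S (S O), S O => -1
  | _, _ => 0
  end.

Definition sgn (b : bool) : F := if b then -1 else 1.

(* K_10 = F 1 (+) (K_3 (x) K_3):  an element (l, A) stands for
   l * 1 + \sum_{i,j} A i j (basis_i (x) basis_j). *)
Definition K10 : Type := (F * 'M[F]_3)%type.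

Definition k10zero : K10 := (0, 0).
Definition k10add (u v : K10) : K10 := (u.1 + v.1, u.2 + v.2).
Definition k10scale (c : F) (u : K10) : K10 := (c * u.1, c *: u.2).

(* bilinear extension of: 1 is the identity and
   (a(x)b)(c(x)d) = (-1)^{|b||c|} (ac (x) bd - 3/4 (a|c)(b|d) 1) *)
Definition k10mul (u v : K10) : K10 :=
  let A := u.2 in let B := v.2 in
  (u.1 * v.1 - (3%:R / 4%:R) *
     (\sum_(i < 3) \sum_(j < 3) \sum_(k < 3) \sum_(l < 3)
        sgn (p3 j && p3 k) * A i j * B k l * f3 i k * f3 j l),
   u.1 *: B + v.1 *: A +
   \matrix_(r < 3, s < 3)
     (\sum_(i < 3) \sum_(j < 3) \sum_(k < 3) \sum_(l < 3)
        sgn (p3 j && p3 k) * A i j * B k l * m3 i k r * m3 j l s)).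

Definition k10even (u : K10) : K10 :=
  (u.1, \matrix_(i < 3, j < 3) (if p3 i (+) p3 j then 0 else u.2 i j)).

Definition is_even (u : K10) : Prop := u = k10even u.
Definition is_odd (u : K10) : Prop := k10even u = k10zero.

Definition kset := K10 -> Prop.

Record is_subalgebra (S : kset) : Prop := {
  sub0 : S k10zero;
  subD : forall u v, S u -> S v -> S (k10add u v);
  subZ : forall c u, S u -> S (k10scale c u);
  subGr : forall u, S u -> S (k10even u);
  subM : forall u v, S u -> S v -> S (k10mul u v) }.

Definition is_maximal_subalgebra (S : kset) : Prop :=
  [/\ is_subalgebra S,
      exists u, ~ S u &
      forall T : kset, is_subalgebra T -> (forall u, S u -> T u) ->
        (forall u, T u -> S u) \/ (forall u, T u)].

Record is_automorphism (g : K10 -> K10) : Prop := {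
  autD : forall u v, g (k10add u v) = k10add (g u) (g v);
  autZ : forall c u, g (k10scale c u) = k10scale c (g u);
  autBij : bijective g;
  autEven : forall u, is_even u -> is_even (g u);
  autOdd : forall u, is_odd u -> is_odd (g u);
  autM : forall u v, g (k10mul u v) = k10mul (g u) (g v) }.

Definition aut_image (g : K10 -> K10) (S : kset) : kset :=
  fun v => exists2 u, S u & v = g u.

Definition same_set (S T : kset) : Prop := forall u, S u <-> T u.

Definition k10phi (u : K10) : K10 :=
  (u.1, \matrix_(i < 3, j < 3) (sgn (p3 i && p3 j) * u.2 j i)).

Definition sub_i : kset := fun u => is_even u.
Definition sub_ii : kset := fun u => k10phi u = u.
(* (iii) F1 (+) (M (x) K_3), M = Fe + Fx : no y (x) _ components *)
Definition sub_iii : kset := fun u => forall j : 'I_3, u.2 2%:R j = 0.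
(* (iv) F1 + F(e(x)e) + (x (x) K_3) + (K_3 (x) y): the components on
   e(x)x, y(x)e, y(x)x vanish *)
Definition sub_iv : kset := fun u =>
  [/\ u.2 0 1%:R = 0, u.2 2%:R 0 = 0 & u.2 2%:R 1%:R = 0].

Definition listed (k : 'I_4) : kset :=
  match nat_of_ord k with
  | O => sub_i | S O => sub_ii | S (S O) => sub_iii | _ => sub_iv end.

End K10.
Arguments listed : clear implicits.

(* Main.v *)
Require Import Defs.
From HB Require Import structures.
From mathcomp Require Import all_boot all_order all_algebra.
From mathcomp Require Import ring.
From Stdlib Require Import Classical.
Set Implicit Arguments. Unset Strict Implicit. Unset Printing Implicit Defensive.
Import GRing.Theory.
Local Open Scope ring_scope.

Section Rec.
Variable F : fieldType.

Record R := mkR { rl : F; rm : F; a1 : F; a2 : F; b1 : F; b2 : F;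
  t11 : F; t12 : F; t21 : F; t22 : F }.

Definition entry (r : R) (i j : 'I_3) : F :=
  match nat_of_ord i, nat_of_ord j with
  | O, O => rm r | O, S O => a1 r | O, _ => a2 r
  | S O, O => b1 r | S O, S O => t11 r | S O, _ => t12 r
  | _, O => b2 r | _, S O => t21 r | _, _ => t22 r end.

Definition toK (r : R) : K10 F := (rl r, \matrix_(i < 3, j < 3) entry r i j).

Definition i0 : 'I_3 := Ordinal (isT : (0 < 3)%N).
Definition i1 : 'I_3 := Ordinal (isT : (1 < 3)%N).
Definition i2 : 'I_3 := Ordinal (isT : (2 < 3)%N).
Lemma big3 (G : 'I_3 -> F) : \sum_(i < 3) G i = G i0 + G i1 + G i2.
Proof.
rewrite !big_ord_recr big_ord0 /= add0r.
by congr (G _ + G _ + G _); apply: val_inj.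
Qed.

Definition ofK (u : K10 F) : R :=
  mkR u.1 (u.2 i0 i0) (u.2 i0 i1) (u.2 i0 i2) (u.2 i1 i0) (u.2 i2 i0)
      (u.2 i1 i1) (u.2 i1 i2) (u.2 i2 i1) (u.2 i2 i2).

Lemma toK_ofK u : toK (ofK u) = u.
Proof.
case: u => l A; rewrite /toK /=; congr pair; apply/matrixP => i j; rewrite mxE.
by case: i => [[|[|[|i]]] Hi] //; case: j => [[|[|[|j]]] Hj] //=;
  congr (A _ _); apply: val_inj.
Qed.

Lemma ofK_toK r : ofK (toK r) = r.
Proof. by case: r => *; rewrite /ofK /toK /= !mxE. Qed.

Definition h : F := 2%:R^-1.
Definition sy (p1 p2 q1 q2 : F) := p1 * q2 - p2 * q1.

Definition mulR (r s : R) : R :=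
  let be := sy (a1 r) (a2 r) (a1 s) (a2 s) + sy (b1 r) (b2 r) (b1 s) (b2 s) in
  let I := t11 r * t22 s + t22 r * t11 s - t12 r * t21 s - t21 r * t12 s in
  mkR (rl r * rl s - 3%:R / 16%:R * rm r * rm s - 3%:R / 8%:R * be + 3%:R/4%:R * I)
      (rl r * rm s + rm r * rl s + rm r * rm s + be - I)
      (rl r * a1 s + rl s * a1 r + h * rm r * a1 s + h * rm s * a1 r
        - h * (b2 s * t11 r - b1 s * t21 r) - h * (b2 r * t11 s - b1 r * t21 s))
      (rl r * a2 s + rl s * a2 r + h * rm r * a2 s + h * rm s * a2 r
        - h * (b2 s * t12 r - b1 s * t22 r) - h * (b2 r * t12 s - b1 r * t22 s))
      (rl r * b1 s + rl s * b1 r + h * rm r * b1 s + h * rm s * b1 r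
        + h * (a2 s * t11 r - a1 s * t12 r) + h * (a2 r * t11 s - a1 r * t12 s))
      (rl r * b2 s + rl s * b2 r + h * rm r * b2 s + h * rm s * b2 r
        + h * (a2 s * t21 r - a1 s * t22 r) + h * (a2 r * t21 s - a1 r * t22 s))
      (rl r * t11 s + rl s * t11 r + 4%:R^-1 * rm r * t11 s + 4%:R^-1 * rm s * t11 r
        + 4%:R^-1 * (b1 r * a1 s - b1 s * a1 r))
      (rl r * t12 s + rl s * t12 r + 4%:R^-1 * rm r * t12 s + 4%:R^-1 * rm s * t12 r
        + 4%:R^-1 * (b1 r * a2 s - b1 s * a2 r))
      (rl r * t21 s + rl s * t21 r + 4%:R^-1 * rm r * t21 s + 4%:R^-1 * rm s * t21 r
        + 4%:R^-1 * (b2 r * a1 s - b2 s * a1 r))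
      (rl r * t22 s + rl s * t22 r + 4%:R^-1 * rm r * t22 s + 4%:R^-1 * rm s * t22 r
        + 4%:R^-1 * (b2 r * a2 s - b2 s * a2 r)).

Definition mulRd (d1 d2 : F) (r s : R) : R :=
  let be := d2 * sy (a1 r) (a2 r) (a1 s) (a2 s) + d1 * sy (b1 r) (b2 r) (b1 s) (b2 s) in
  let I := d1 * d2 * (t11 r * t22 s + t22 r * t11 s - t12 r * t21 s - t21 r * t12 s) in
  mkR (rl r * rl s - 3%:R / 16%:R * rm r * rm s - 3%:R / 8%:R * be + 3%:R/4%:R * I)
      (rl r * rm s + rm r * rl s + rm r * rm s + be - I)
      (rl r * a1 s + rl s * a1 r + h * rm r * a1 s + h * rm s * a1 r
        - d1 * h * (b2 s * t11 r - b1 s * t21 r) - d1 * h * (b2 r * t11 s - b1 r * t21 s))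
      (rl r * a2 s + rl s * a2 r + h * rm r * a2 s + h * rm s * a2 r
        - d1 * h * (b2 s * t12 r - b1 s * t22 r) - d1 * h * (b2 r * t12 s - b1 r * t22 s))
      (rl r * b1 s + rl s * b1 r + h * rm r * b1 s + h * rm s * b1 r
        + d2 * h * (a2 s * t11 r - a1 s * t12 r) + d2 * h * (a2 r * t11 s - a1 r * t12 s))
      (rl r * b2 s + rl s * b2 r + h * rm r * b2 s + h * rm s * b2 r
        + d2 * h * (a2 s * t21 r - a1 s * t22 r) + d2 * h * (a2 r * t21 s - a1 r * t22 s))
      (rl r * t11 s + rl s * t11 r + 4%:R^-1 * rm r * t11 s + 4%:R^-1 * rm s * t11 r
        + 4%:R^-1 * (b1 r * a1 s - b1 s * a1 r))
      (rl r * t12 s + rl s * t12 r + 4%:R^-1 * rm r * t12 s + 4%:R^-1 * rm s * t12 r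
        + 4%:R^-1 * (b1 r * a2 s - b1 s * a2 r))
      (rl r * t21 s + rl s * t21 r + 4%:R^-1 * rm r * t21 s + 4%:R^-1 * rm s * t21 r
        + 4%:R^-1 * (b2 r * a1 s - b2 s * a1 r))
      (rl r * t22 s + rl s * t22 r + 4%:R^-1 * rm r * t22 s + 4%:R^-1 * rm s * t22 r
        + 4%:R^-1 * (b2 r * a2 s - b2 s * a2 r)).



Hypothesis h2 : (2%:R : F) != 0.

Lemma mulE r s : k10mul (toK r) (toK s) = toK (mulR r s).
Proof.
have h4 : (4%:R : F) != 0 by rewrite (_ : 4 = 2 * 2)%N // natrM mulf_neq0.
have h8 : (8%:R : F) != 0 by rewrite (_ : 8 = 2 * 4)%N // natrM mulf_neq0.
have h16 : (16%:R : F) != 0 by rewrite (_ : 16 = 4 * 4)%N // natrM mulf_neq0.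
rewrite /k10mul /toK /=; congr pair.
  rewrite !big3 !mxE /f3 /sgn /entry /= /h /sy. field. by rewrite h4 h8 h16 h2.
apply/matrixP => i j; rewrite !mxE.
case: i => [[|[|[|i]]] Hi] //; case: j => [[|[|[|j]]] Hj] //;
rewrite !big3 !mxE /m3 /sgn /entry /= /h /sy; field; by rewrite ?h4 ?h8 ?h16 ?h2.
Qed.

Lemma n4 : (4%:R : F) != 0. Proof. by rewrite (_ : 4 = 2 * 2)%N // natrM mulf_neq0. Qed.
Lemma n8 : (8%:R : F) != 0. Proof. by rewrite (_ : 8 = 2 * 4)%N // natrM mulf_neq0 ?n4. Qed.
Lemma n16 : (16%:R : F) != 0. Proof. by rewrite (_ : 16 = 4 * 4)%N // natrM mulf_neq0 ?n4. Qed.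

Lemma eqR r s : rl r = rl s -> rm r = rm s -> a1 r = a1 s -> a2 r = a2 s ->
  b1 r = b1 s -> b2 r = b2 s -> t11 r = t11 s -> t12 r = t12 s ->
  t21 r = t21 s -> t22 r = t22 s -> r = s.
Proof. by case: r => ? ? ? ? ? ? ? ? ? ?; case: s => ? ? ? ? ? ? ? ? ? ? /= -> -> -> -> -> -> -> -> -> ->. Qed.

Record M2 := mkM { m11 : F; m12 : F; m21 : F; m22 : F }.
Definition det2 g := m11 g * m22 g - m12 g * m21 g.
Definition ap1 g (v1 v2 : F) := m11 g * v1 + m12 g * v2.
Definition ap2 g (v1 v2 : F) := m21 g * v1 + m22 g * v2.

Definition thR (g1 g2 : M2) (r : R) : R :=
  let u11 := ap1 g2 (t11 r) (t12 r) in let u12 := ap2 g2 (t11 r) (t12 r) in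
  let u21 := ap1 g2 (t21 r) (t22 r) in let u22 := ap2 g2 (t21 r) (t22 r) in
  mkR (rl r) (rm r) (ap1 g2 (a1 r) (a2 r)) (ap2 g2 (a1 r) (a2 r))
      (ap1 g1 (b1 r) (b2 r)) (ap2 g1 (b1 r) (b2 r))
      (ap1 g1 u11 u21) (ap1 g1 u12 u22) (ap2 g1 u11 u21) (ap2 g1 u12 u22).

Lemma mulRd1 u v : mulRd 1 1 u v = mulR u v.
Proof. by apply: eqR; rewrite /mulRd /mulR /= /sy; field; rewrite ?n4 ?n8 ?n16. Qed.

Lemma thR_mulD g1 g2 u v :
  mulR (thR g1 g2 u) (thR g1 g2 v) = thR g1 g2 (mulRd (det2 g1) (det2 g2) u v).
Proof.
case: g1 => p1 q1 r1 s1; case: g2 => p2 q2 r2 s2.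
by apply: eqR; rewrite /thR /mulR /mulRd /ap1 /ap2 /det2 /sy /=; field; rewrite ?n4 ?n8 ?n16.
Qed.

Lemma thR_mul g1 g2 u v : det2 g1 = 1 -> det2 g2 = 1 ->
  mulR (thR g1 g2 u) (thR g1 g2 v) = thR g1 g2 (mulR u v).
Proof. by move=> d1 d2; rewrite thR_mulD d1 d2 mulRd1. Qed.
End Rec.

Section P2.
Variable F : fieldType.
Hypothesis h2 : (2%:R : F) != 0.
Local Notation R := (R F).
Local Notation toK := (@toK F).
Local Notation ofK := (@ofK F).

Definition addR (r s : R) := mkR (rl r + rl s) (rm r + rm s) (a1 r + a1 s) (a2 r + a2 s)
  (b1 r + b1 s) (b2 r + b2 s) (t11 r + t11 s) (t12 r + t12 s) (t21 r + t21 s) (t22 r + t22 s).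
Definition scaleR (c : F) (r : R) := mkR (c * rl r) (c * rm r) (c * a1 r) (c * a2 r)
  (c * b1 r) (c * b2 r) (c * t11 r) (c * t12 r) (c * t21 r) (c * t22 r).
Definition zeroR : R := mkR 0 0 0 0 0 0 0 0 0 0.
Definition evenR (r : R) := mkR (rl r) (rm r) 0 0 0 0 (t11 r) (t12 r) (t21 r) (t22 r).
Definition phiR (r : R) := mkR (rl r) (rm r) (b1 r) (b2 r) (a1 r) (a2 r)
  (- t11 r) (- t21 r) (- t12 r) (- t22 r).

Ltac mxcase := apply/matrixP; case=> [[|[|[|?]]] ?]; case=> [[|[|[|?]]] ?];
  rewrite ?mxE //=.

Lemma addE r s : k10add (toK r) (toK s) = toK (addR r s).
Proof. by rewrite /k10add /= ; congr pair; mxcase. Qed.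
Lemma scaleE c r : k10scale c (toK r) = toK (scaleR c r).
Proof. by rewrite /k10scale /=; congr pair; mxcase. Qed.
Lemma zeroE : k10zero F = toK zeroR.
Proof. by rewrite /k10zero /=; congr pair; mxcase. Qed.
Lemma evenE r : k10even (toK r) = toK (evenR r).
Proof. by rewrite /k10even /=; congr pair; mxcase. Qed.
Lemma phiE r : k10phi (toK r) = toK (phiR r).
Proof. by rewrite /k10phi /=; congr pair; mxcase; rewrite /sgn /= ?mul1r ?mulN1r. Qed.

Lemma toK_inj : injective toK.
Proof. by move=> r s e; rewrite -(ofK_toK r) e ofK_toK. Qed.

Definition LR (k : nat) (r : R) : Prop :=
  match k with
  | O => [/\ a1 r = 0, a2 r = 0, b1 r = 0 & b2 r = 0]
  | S O => [/\ a1 r = b1 r, a2 r = b2 r, t11 r = 0, t22 r = 0 & t12 r = - t21 r]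
  | S (S O) => [/\ b2 r = 0, t21 r = 0 & t22 r = 0]
  | _ => [/\ a1 r = 0, b2 r = 0 & t21 r = 0]
  end.

Lemma twice0 (x : F) : x = - x -> x = 0.
Proof.
move=> e; have: 2%:R * x = 0 by rewrite mulr_natl mulr2n {2}e subrr.
by move/eqP; rewrite mulf_eq0 (negbTE h2) /= => /eqP.
Qed.

Lemma listedE (k : 'I_4) r : listed F k (toK r) <-> LR k r.
Proof.
case: k => [[|[|[|[|k]]]] Hk] //=; rewrite /listed /=.
- rewrite /sub_i /is_even evenE; split => [/toK_inj e|].
    by case: r e => ? ? ? ? ? ? ? ? ? ? [] /= *; subst.
  by case: r => ? ? ? ? ? ? ? ? ? ? [] /= -> -> -> ->.
- rewrite /sub_ii phiE; split => [/toK_inj e|].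
    move: (congr1 (@a1 F) e) (congr1 (@a2 F) e) (congr1 (@t11 F) e)
      (congr1 (@t22 F) e) (congr1 (@t21 F) e) => /= -> -> e3 e4 <-.
    by split => //; [apply: twice0; rewrite e3 | apply: twice0; rewrite e4 | rewrite opprK].
  by case=> e1 e2 e3 e4 e5; congr toK; apply: eqR => //=;
    rewrite ?e1 ?e2 ?e3 ?e4 ?e5 ?oppr0 ?opprK.
- rewrite /sub_iii; split => [H|[e1 e2 e3] j].
    by split; [move: (H 0) | move: (H 1%:R) | move: (H 2%:R)]; rewrite mxE.
  by rewrite mxE; case: j => [[|[|[|j]]] Hj].
- rewrite /sub_iv !mxE /=; split => [[e1 e2 e3]|[e1 e2 e3]]; by split.
Qed.

End P2.

Section P3.
Variable F : fieldType.
Hypothesis h2 : (2%:R : F) != 0.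
Local Notation R := (R F).
Local Notation toK := (@toK F).
Local Notation ofK := (@ofK F).

Record subR (P : R -> Prop) : Prop := {
  P0 : P (zeroR F);
  PD : forall r s, P r -> P s -> P (addR r s);
  PZ : forall c r, P r -> P (scaleR c r);
  PE : forall r, P r -> P (evenR r);
  PM : forall r s, P r -> P s -> P (mulR r s) }.

Lemma subK (S : kset F) : is_subalgebra S <-> subR (fun r => S (toK r)).
Proof.
split=> [[s0 sD sZ sE sM]|[s0 sD sZ sE sM]]; split.
- by rewrite -zeroE.
- by move=> r s hr hs; rewrite -addE; apply: sD.
- by move=> c r hr; rewrite -scaleE; apply: sZ.
- by move=> r hr; rewrite -evenE; apply: sE.
- by move=> r s hr hs; rewrite -(mulE h2); apply: sM.
- by rewrite zeroE.
- by move=> u v; rewrite -(toK_ofK u) -(toK_ofK v) addE; apply: sD.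
- by move=> c u; rewrite -(toK_ofK u) scaleE; apply: sZ.
- by move=> u; rewrite -(toK_ofK u) evenE; apply: sE.
- by move=> u v; rewrite -(toK_ofK u) -(toK_ofK v) (mulE h2); apply: sM.
Qed.

Record autR := AutR {
  af : R -> R; ag : R -> R;
  afK : cancel af ag; agK : cancel ag af;
  afD : forall r s, af (addR r s) = addR (af r) (af s);
  afZ : forall c r, af (scaleR c r) = scaleR c (af r);
  afE : forall r, af (evenR r) = evenR (af r);
  afM : forall r s, af (mulR r s) = mulR (af r) (af s) }.

Definition liftA (f : autR) : K10 F -> K10 F := fun u => toK (af f (ofK u)).

Lemma af0 (f : autR) : af f (zeroR F) = zeroR F.
Proof.
have -> : zeroR F = scaleR 0 (zeroR F) by apply: eqR; rewrite /= mul0r.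
by rewrite afZ; apply: eqR; rewrite /= !mul0r.
Qed.

Lemma liftA_aut f : is_automorphism (liftA f).
Proof.
split.
- by move=> u v; rewrite /liftA -(toK_ofK u) -(toK_ofK v) addE !ofK_toK afD addE.
- by move=> c u; rewrite /liftA -(toK_ofK u) scaleE !ofK_toK afZ scaleE.
- exists (fun u => toK (ag f (ofK u))) => u; rewrite /liftA ofK_toK.
    by rewrite afK toK_ofK.
  by rewrite agK toK_ofK.
- move=> u; rewrite /is_even /liftA -(toK_ofK u) evenE ofK_toK => /toK_inj e.
  by rewrite evenE -afE -e.
- move=> u; rewrite /is_odd /liftA -(toK_ofK u) evenE ofK_toK zeroE => /toK_inj e.
  by rewrite evenE -afE e af0.
- by move=> u v; rewrite /liftA -(toK_ofK u) -(toK_ofK v) (mulE h2) !ofK_toK afM (mulE h2).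
Qed.

Definition compA (f g : autR) : autR.
Proof.
refine (@AutR (fun r => af f (af g r)) (fun r => ag g (ag f r)) _ _ _ _ _ _).
- by move=> r; rewrite afK afK.
- by move=> r; rewrite agK agK.
- by move=> r s; rewrite !afD.
- by move=> c r; rewrite !afZ.
- by move=> r; rewrite !afE.
- by move=> r s; rewrite !afM.
Defined.

Definition phiA : autR.
Proof.
refine (@AutR (@phiR F) (@phiR F) _ _ _ _ _ _).
- by move=> r; apply: eqR; rewrite /= ?opprK.
- by move=> r; apply: eqR; rewrite /= ?opprK.
- by move=> r s; apply: eqR; rewrite /= ?opprD.
- by move=> c r; apply: eqR; rewrite /= ?mulrN.
- by move=> r; apply: eqR; rewrite /= ?oppr0.
- by move=> r s; apply: eqR; rewrite /mulR /= /h /sy; field; rewrite ?n4 ?n8 ?n16.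
Defined.

Definition adj (g : M2 F) := mkM (m22 g) (- m12 g) (- m21 g) (m11 g).

Lemma sl2_cases (g : M2 F) : det2 g = 1 ->
  (exists p q r, p != 0 /\ g = mkM p q r ((1 + q * r) / p)) \/
  (exists q s, q != 0 /\ g = mkM 0 q (- 1 / q) s).
Proof.
case: g => p q x y; rewrite /det2 /= => hd; case: (eqVneq p 0) => hp.
  right; subst p; have hq : q != 0.
    by apply/eqP => hq; move: hd; rewrite hq !mul0r subr0 => /esym/eqP; rewrite oner_eq0.
  by exists q, y; split => //; congr mkM; rewrite -hd; field.
by left; exists p, q, x; split => //; congr mkM; rewrite -hd; field.
Qed.

Lemma adj_det g : det2 (adj g) = det2 g.
Proof. by rewrite /det2 /=; ring. Qed.

Lemma thK g1 g2 : det2 g1 = 1 -> det2 g2 = 1 ->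
  cancel (thR g1 g2) (thR (adj g1) (adj g2)).
Proof.
move=> d1 d2 r.
case: (sl2_cases d1) => [[p1 [q1 [r1 [hp1 ->]]]]|[q1 [s1 [hq1 ->]]]];
case: (sl2_cases d2) => [[p2 [q2 [r2 [hp2 ->]]]]|[q2 [s2 [hq2 ->]]]];
by apply: eqR; rewrite /thR /adj /ap1 /ap2 /=; field; rewrite ?hp1 ?hp2 ?hq1 ?hq2.
Qed.

Definition thA (g1 g2 : M2 F) (d1 : det2 g1 = 1) (d2 : det2 g2 = 1) : autR.
Proof.
refine (@AutR (thR g1 g2) (thR (adj g1) (adj g2)) (thK d1 d2) _ _ _ _ _).
- have := thK (etrans (adj_det g1) d1) (etrans (adj_det g2) d2).
  have -> : adj (adj g1) = g1 by case: (g1) => *; rewrite /adj /= !opprK.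
  by have -> : adj (adj g2) = g2 by case: (g2) => *; rewrite /adj /= !opprK.
- by move=> r s; apply: eqR; rewrite /thR /ap1 /ap2 /=; ring.
- by move=> c r; apply: eqR; rewrite /thR /ap1 /ap2 /=; ring.
- by move=> r; apply: eqR; rewrite /thR /ap1 /ap2 /=; ring.
- by move=> r s; rewrite thR_mul.
Defined.

End P3.

Section P4.
Variable F : fieldType.
Hypothesis h2 : (2%:R : F) != 0.
Hypothesis h3 : (3%:R : F) != 0.
Local Notation R := (R F).
Let n4' := n4 h2. Let n8' := n8 h2. Let n16' := n16 h2.
Ltac fs4 := field; rewrite ?n4' ?n8' ?n16' ?h2 ?h3.

Definition od (x1 x2 y1 y2 : F) : R := mkR 0 0 x1 x2 y1 y2 0 0 0 0.
Definition X v1 v2 := od v1 v2 0 0.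
Definition Y v1 v2 := od 0 0 v1 v2.
Definition oddR (r : R) := od (a1 r) (a2 r) (b1 r) (b2 r).
Definition nz (v1 v2 : F) := (v1 != 0) || (v2 != 0).

Variable P : R -> Prop.
Hypothesis sP : subR P.

Lemma Podd r : P r -> P (oddR r).
Proof.
move=> hr; have -> : oddR r = addR r (scaleR (-1) (evenR r)).
  by apply: eqR; rewrite /= ?mulr0 ?addr0 // mulN1r subrr.
by apply: (PD sP) => //; apply: (PZ sP); apply: (PE sP).
Qed.

Lemma Plin c d r s : P r -> P s -> P (addR (scaleR c r) (scaleR d s)).
Proof. by move=> hr hs; apply: (PD sP); apply: (PZ sP). Qed.

Lemma spanX u1 u2 w1 w2 : P (X u1 u2) -> P (X w1 w2) -> sy u1 u2 w1 w2 != 0 ->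
  forall v1 v2, P (X v1 v2).
Proof.
move=> hu hw hs v1 v2.
have -> : X v1 v2 = addR (scaleR (sy v1 v2 w1 w2 / sy u1 u2 w1 w2) (X u1 u2))
                          (scaleR (sy u1 u2 v1 v2 / sy u1 u2 w1 w2) (X w1 w2)).
  by move: hs; rewrite /sy => hs; apply: eqR; rewrite /= ?mulr0 ?addr0 //; field.
exact: Plin.
Qed.

Lemma spanY u1 u2 w1 w2 : P (Y u1 u2) -> P (Y w1 w2) -> sy u1 u2 w1 w2 != 0 ->
  forall v1 v2, P (Y v1 v2).
Proof.
move=> hu hw hs v1 v2.
have -> : Y v1 v2 = addR (scaleR (sy v1 v2 w1 w2 / sy u1 u2 w1 w2) (Y u1 u2))
                          (scaleR (sy u1 u2 v1 v2 / sy u1 u2 w1 w2) (Y w1 w2)).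
  by move: hs; rewrite /sy => hs; apply: eqR; rewrite /= ?mulr0 ?addr0 //; field.
exact: Plin.
Qed.

Definition Kfull := forall v1 v2, P (X v1 v2).
Definition K2full := forall v1 v2, P (Y v1 v2).

Lemma Pall : Kfull -> K2full -> forall r, P r.
Proof.
move=> kx ky r.
have PT : forall i j : bool, forall c : F,
    P (mkR 0 0 0 0 0 0 (if i && j then c else 0) (if i && ~~ j then c else 0)
         (if ~~ i && j then c else 0) (if ~~ i && ~~ j then c else 0)).
  move=> i j c.
  have := PZ sP (- 4%:R * c) (PM sP (kx (if j then 1 else 0) (if j then 0 else 1))
                                   (ky (if i then 1 else 0) (if i then 0 else 1))).
  by congr P; apply: eqR; case: i; case: j; rewrite /mulR /= /h /sy; fs4.
have P1 : forall c, P (mkR c 0 0 0 0 0 0 0 0 0).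
  move=> c.
  have := Plin (8%:R / 3%:R * c) (8%:R / 3%:R * c) (PM sP (kx 1 0) (kx 0 1))
    (PM sP (PT true true 1) (PT false false 1)).
  by congr P; apply: eqR; rewrite /mulR /= /h /sy; fs4.
have PE1 : forall c, P (mkR 0 c 0 0 0 0 0 0 0 0).
  move=> c.
  have := Plin c (3%:R / 8%:R * c) (PM sP (kx 1 0) (kx 0 1)) (P1 1).
  by congr P; apply: eqR; rewrite /mulR /= /h /sy; fs4.
have -> : r = addR (addR (addR (addR (mkR (rl r) 0 0 0 0 0 0 0 0 0) (mkR 0 (rm r) 0 0 0 0 0 0 0 0))
     (addR (X (a1 r) (a2 r)) (Y (b1 r) (b2 r))))
     (addR (mkR 0 0 0 0 0 0 (if true && true then t11 r else 0) (if true && ~~ true then t11 r else 0)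
         (if ~~ true && true then t11 r else 0) (if ~~ true && ~~ true then t11 r else 0))
           (mkR 0 0 0 0 0 0 (if true && false then t12 r else 0) (if true && ~~ false then t12 r else 0)
         (if ~~ true && false then t12 r else 0) (if ~~ true && ~~ false then t12 r else 0))))
     (addR (mkR 0 0 0 0 0 0 (if false && true then t21 r else 0) (if false && ~~ true then t21 r else 0)
         (if ~~ false && true then t21 r else 0) (if ~~ false && ~~ true then t21 r else 0))
           (mkR 0 0 0 0 0 0 (if false && false then t22 r else 0) (if false && ~~ false then t22 r else 0)
         (if ~~ false && false then t22 r else 0) (if ~~ false && ~~ false then t22 r else 0))).
  by case: r => *; apply: eqR; rewrite /= ?addr0 ?add0r.
by repeat apply: (PD sP) => //.
Qed.


Lemma A1 : P (X 1 0) -> P (X 0 1) -> forall r, P r -> P (Y (b1 r) (b2 r)).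
Proof.
move=> hx hy r hr.
have := Plin (- 8%:R) (a2 r) (PM sP (PM sP hx (Podd hr)) hy) hy.
by congr P; apply: eqR; rewrite /mulR /= /h /sy; fs4.
Qed.

Lemma finish2 : P (X 1 0) -> P (X 0 1) -> (forall r, P r -> b2 r = 0) ->
  forall r, P r -> LR 2 r.
Proof.
move=> hx hy hb r hr; split; first exact: hb.
  have -> : t21 r = 2%:R * b2 (mulR (evenR r) (X 0 1)) by rewrite /mulR /= /h; fs4.
  by rewrite hb ?mulr0 //; apply: (PM sP) => //; apply: (PE sP).
have -> : t22 r = - 2%:R * b2 (mulR (evenR r) (X 1 0)) by rewrite /mulR /= /h; fs4.
by rewrite hb ?mulr0 //; apply: (PM sP) => //; apply: (PE sP).
Qed.

Lemma finish3 d1 : P (od 0 1 d1 0) -> (forall r, P r -> a1 r = 0) ->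
  (forall r, P r -> b2 r = 0) -> forall r, P r -> LR 3 r.
Proof.
move=> hw ha hb r hr; split; [exact: ha | exact: hb |].
have -> : t21 r = 2%:R * b2 (mulR (evenR r) (od 0 1 d1 0)) by rewrite /mulR /= /h; fs4.
by rewrite hb ?mulr0 //; apply: (PM sP) => //; apply: (PE sP).
Qed.

Lemma finish1 : P (od 1 0 1 0) -> P (od 0 1 0 1) ->
  (forall v1 v2, P (Y v1 v2) -> v1 = 0 /\ v2 = 0) -> forall r, P r -> LR 1 r.
Proof.
move=> hx hy hY.
have AB : forall r, P r -> a1 r = b1 r /\ a2 r = b2 r.
  move=> r hr.
  have : P (addR (oddR r) (addR (scaleR (- a1 r) (od 1 0 1 0)) (scaleR (- a2 r) (od 0 1 0 1)))).
    by apply: (PD sP); [apply: Podd | apply: Plin].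
  have -> : addR (oddR r) (addR (scaleR (- a1 r) (od 1 0 1 0)) (scaleR (- a2 r) (od 0 1 0 1)))
     = Y (b1 r - a1 r) (b2 r - a2 r) by apply: eqR; rewrite /=; ring.
  by case/hY => /eqP; rewrite subr_eq0 => /eqP -> /eqP; rewrite subr_eq0 => /eqP ->.
move=> r hr; have [e1 e2] := AB r hr.
have hm1 : P (mulR (evenR r) (od 1 0 1 0)) by apply: (PM sP) => //; apply: (PE sP).
have hm2 : P (mulR (evenR r) (od 0 1 0 1)) by apply: (PM sP) => //; apply: (PE sP).
have [f1 f2] := AB _ hm1; have [g1 _] := AB _ hm2.
split => //.
- have -> : t11 r = b1 (mulR (evenR r) (od 0 1 0 1)) - a1 (mulR (evenR r) (od 0 1 0 1))
    by rewrite /mulR /= /h; fs4.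
  by rewrite g1 subrr.
- have -> : t22 r = a2 (mulR (evenR r) (od 1 0 1 0)) - b2 (mulR (evenR r) (od 1 0 1 0))
    by rewrite /mulR /= /h; fs4.
  by rewrite f2 subrr.
- apply/eqP; rewrite -subr_eq0 opprK.
  have -> : t12 r + t21 r = 2%:R * (a1 (mulR (evenR r) (od 1 0 1 0)) - b1 (mulR (evenR r) (od 1 0 1 0)))
    by rewrite /mulR /= /h; fs4.
  by rewrite f1 subrr mulr0.
Qed.

End P4.

Section P5.
Variable F : fieldType.
Hypothesis h2 : (2%:R : F) != 0.
Hypothesis h3 : (3%:R : F) != 0.
Local Notation R := (R F).
Let n4' := n4 h2. Let n8' := n8 h2. Let n16' := n16 h2.
Ltac fs5 := field; rewrite ?n4' ?n8' ?n16' ?h2 ?h3.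

Definition Concl (P : R -> Prop) :=
  exists (f : autR F) (k : 'I_4), forall r, P r -> LR k (ag f r).

Definition idA : autR F.
Proof. by refine (@AutR F (fun r => r) (fun r => r) _ _ _ _ _ _). Defined.

Lemma subR_conj (f : autR F) P : subR P -> subR (fun r => P (af f r)).
Proof.
case=> s0 sD sZ sE sM; split.
- by rewrite af0.
- by move=> r s hr hs; rewrite afD; apply: sD.
- by move=> c r hr; rewrite afZ; apply: sZ.
- by move=> r hr; rewrite afE; apply: sE.
- by move=> r s hr hs; rewrite afM; apply: sM.
Qed.

Lemma Concl_conj (f : autR F) P : Concl (fun r => P (af f r)) -> Concl P.
Proof.
case=> g [k H]; exists (compA f g), k => r hr; apply: H => /=; by rewrite agK.
Qed.

Lemma proper_conj (f : autR F) P : (exists r, ~ P r) -> exists r, ~ P (af f r).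
Proof. by case=> r hr; exists (ag f r); rewrite agK. Qed.

Definition I2 : M2 F := mkM 1 0 0 1.
Lemma I2_det : det2 I2 = 1. Proof. by rewrite /det2 /= mulr1 mulr0 subr0. Qed.
Lemma apI1 v1 v2 : ap1 I2 v1 v2 = v1. Proof. by rewrite /ap1 /= mul1r mul0r addr0. Qed.
Lemma apI2 v1 v2 : ap2 I2 v1 v2 = v2. Proof. by rewrite /ap2 /= mul1r mul0r add0r. Qed.

Definition gx (q1 q2 : F) : M2 F :=
  if q1 != 0 then mkM q1 0 q2 (1 / q1) else mkM 0 (- 1 / q2) q2 0.
Lemma gx_det q1 q2 : nz q1 q2 -> det2 (gx q1 q2) = 1.
Proof.
rewrite /gx /nz /det2 => hn; case: (eqVneq q1 0) => [e|hq].
  by rewrite /=; rewrite e eqxx /= in hn; field.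
by rewrite /=; field.
Qed.
Lemma gx_col1 q1 q2 : ap1 (gx q1 q2) 1 0 = q1.
Proof. by rewrite /gx /ap1; case: (eqVneq q1 0) => [->|hq]; rewrite /= mulr1 mulr0 addr0. Qed.
Lemma gx_col2 q1 q2 : ap2 (gx q1 q2) 1 0 = q2.
Proof. by rewrite /gx /ap2; case: (eqVneq q1 0) => [->|hq]; rewrite /= mulr1 mulr0 addr0. Qed.

Definition gy (v1 v2 : F) : M2 F :=
  if v2 != 0 then mkM (1 / v2) v1 0 v2 else mkM 0 v1 (- 1 / v1) 0.
Lemma gy_det v1 v2 : nz v1 v2 -> det2 (gy v1 v2) = 1.
Proof.
rewrite /gy /nz /det2 => hn; case: (eqVneq v2 0) => [e|hq].
  by rewrite /=; rewrite e eqxx orbF in hn; field.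
by rewrite /=; field.
Qed.
Lemma gy_col1 v1 v2 : ap1 (gy v1 v2) 0 1 = v1.
Proof. by rewrite /gy /ap1; case: (eqVneq v2 0) => [->|hq]; rewrite /= mulr1 mulr0 add0r. Qed.
Lemma gy_col2 v1 v2 : ap2 (gy v1 v2) 0 1 = v2.
Proof. by rewrite /gy /ap2; case: (eqVneq v2 0) => [->|hq]; rewrite /= mulr1 mulr0 add0r. Qed.

Lemma ap_inj (g : M2 F) v1 v2 : det2 g = 1 -> ap1 g v1 v2 = 0 -> ap2 g v1 v2 = 0 -> v1 = 0 /\ v2 = 0.
Proof.
move=> d e1 e2.
have f1 : v1 * det2 g = m22 g * ap1 g v1 v2 - m12 g * ap2 g v1 v2 by rewrite /det2 /ap1 /ap2; ring.
have f2 : v2 * det2 g = m11 g * ap2 g v1 v2 - m21 g * ap1 g v1 v2 by rewrite /det2 /ap1 /ap2; ring.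
by move: f1 f2; rewrite d e1 e2 !mulr1 !mulr0 subr0.
Qed.

Lemma ap_sy (g : M2 F) u1 u2 w1 w2 :
  sy (ap1 g u1 u2) (ap2 g u1 u2) (ap1 g w1 w2) (ap2 g w1 w2) = det2 g * sy u1 u2 w1 w2.
Proof. by rewrite /sy /ap1 /ap2 /det2; ring. Qed.

Lemma ap_surj1 (g : M2 F) v1 v2 : det2 g = 1 -> ap1 g (ap1 (adj g) v1 v2) (ap2 (adj g) v1 v2) = v1.
Proof.
move=> d; have : ap1 g (ap1 (adj g) v1 v2) (ap2 (adj g) v1 v2) = det2 g * v1
  by rewrite /adj /ap1 /ap2 /det2 /=; ring.
by rewrite d mul1r.
Qed.
Lemma ap_surj2 (g : M2 F) v1 v2 : det2 g = 1 -> ap2 g (ap1 (adj g) v1 v2) (ap2 (adj g) v1 v2) = v2.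
Proof.
move=> d; have : ap2 g (ap1 (adj g) v1 v2) (ap2 (adj g) v1 v2) = det2 g * v2
  by rewrite /adj /ap1 /ap2 /det2 /=; ring.
by rewrite d mul1r.
Qed.

Lemma th_od (g1 g2 : M2 F) x1 x2 y1 y2 : thR g1 g2 (od x1 x2 y1 y2) =
  od (ap1 g2 x1 x2) (ap2 g2 x1 x2) (ap1 g1 y1 y2) (ap2 g1 y1 y2).
Proof. by apply: eqR; rewrite /thR /ap1 /ap2 /=; ring. Qed.

Lemma nzP (v1 v2 : F) : ~ nz v1 v2 -> v1 = 0 /\ v2 = 0.
Proof. by rewrite /nz; case: eqP => // ->; case: eqP. Qed.

End P5.

Section P6.
Variable F : fieldType.
Hypothesis h2 : (2%:R : F) != 0.
Hypothesis h3 : (3%:R : F) != 0.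
Local Notation R := (R F).
Let n4' := n4 h2. Let n8' := n8 h2. Let n16' := n16 h2.
Ltac fs6 := field; rewrite ?n4' ?n8' ?n16' ?h2 ?h3.

Lemma ap100 (g : M2 F) : ap1 g 0 0 = 0. Proof. by rewrite /ap1 !mulr0 addr0. Qed.
Lemma ap200 (g : M2 F) : ap2 g 0 0 = 0. Proof. by rewrite /ap2 !mulr0 addr0. Qed.
Lemma phi_od (x1 x2 y1 y2 : F) : phiR (od x1 x2 y1 y2) = od y1 y2 x1 x2.
Proof. by apply: eqR; rewrite /= ?oppr0. Qed.

Lemma caseA (P : R -> Prop) : subR P -> (exists r, ~ P r) -> Kfull P -> Concl P.
Proof.
move=> sP [r0 hr0] kx.
have hYb := A1 h2 sP (kx 1 0) (kx 0 1).
case: (classic (exists q1 q2, nz q1 q2 /\ P (Y q1 q2))) => [[q1 [q2 [nq hq]]]|noq].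
  have hline : forall r, P r -> sy q1 q2 (b1 r) (b2 r) = 0.
    move=> r hr; apply/eqP/negP => /negP hs; apply: hr0.
    apply: (Pall h2 h3 sP kx); exact: (spanY sP hq (hYb _ hr) hs).
  have d1 := gx_det nq.
  apply: (Concl_conj (f := thA h2 d1 (I2_det F))).
  exists (idA F), (Ordinal (isT : (2 < 4)%N)) => r hr /=.
  have sP' := subR_conj (thA h2 d1 (I2_det F)) sP.
  apply: (finish2 h2 sP') => //=.
  - by rewrite /X th_od apI1 apI2 !ap100 !ap200; apply: kx.
  - by rewrite /X th_od apI1 apI2 !ap100 !ap200; apply: kx.
  move=> r' hr'; have := hline _ hr'; rewrite /=.
  have := ap_sy (gx q1 q2) 1 0 (b1 r') (b2 r'); rewrite gx_col1 gx_col2 d1 mul1r => ->.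
  by rewrite /sy mul1r mul0r subr0.
have hb0 : forall r, P r -> b1 r = 0 /\ b2 r = 0.
  move=> r hr; apply: nzP => hn; apply: noq; exists (b1 r), (b2 r); split => //; exact: hYb.
exists (idA F), (Ordinal (isT : (2 < 4)%N)) => r hr /=.
exact: (finish2 h2 sP (kx 1 0) (kx 0 1) (fun r1 hr1 => (hb0 r1 hr1).2) hr).
Qed.

Lemma caseC (P : R -> Prop) (v1 v2 : F) : subR P -> ~ Kfull P -> ~ K2full P -> nz v1 v2 -> P (X v1 v2) ->
  Concl P.
Proof.
move=> sP nkx nky nv hv.
have [q1 [q2 [nq hq]]] : exists q1 q2, nz q1 q2 /\
    (P (Y q1 q2) \/ forall y1 y2, P (Y y1 y2) -> y1 = 0 /\ y2 = 0).
  case: (classic (exists q1 q2, nz q1 q2 /\ P (Y q1 q2))) => [[q1 [q2 [nq hq]]]|noq].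
    by exists q1, q2; split => //; left.
  exists 1, 0; split; first by rewrite /nz oner_eq0.
  by right => y1 y2 hy; apply: nzP => hn; apply: noq; exists y1, y2.
have d1 := gx_det nq; have d2 := gy_det nv.
apply: (Concl_conj (f := thA h2 d1 d2)).
have sP' := subR_conj (thA h2 d1 d2) sP.
set P' := fun r => P (af (thA h2 d1 d2) r) in sP' *.
have hx : P' (X 0 1) by rewrite /P' /= /X th_od gy_col1 gy_col2 !ap100 !ap200.
have kfT : Kfull P' -> Kfull P.
  move=> kx w1 w2; have := kx (ap1 (adj (gy v1 v2)) w1 w2) (ap2 (adj (gy v1 v2)) w1 w2).
  by rewrite /P' /= /X th_od ap_surj1 // ap_surj2 // !ap100 !ap200.
have F1 : forall r, P' r -> a1 r = 0.
  move=> r hr; apply/eqP/negP => /negP hc; apply: nkx; apply: kfT.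
  have hQ : P' (X (a1 r * a1 r) (a1 r * a2 r)).
    have := PZ sP' (- 8%:R) (PM sP' (PM sP' hx (Podd sP' hr)) (Podd sP' hr)).
    by congr P'; apply: eqR; rewrite /mulR /= /h /sy; fs6.
  apply: (spanX sP' hx hQ).
  by rewrite /sy mul0r sub0r mul1r oppr_eq0 mulf_neq0.
have F2 : forall r, P' r -> b2 r = 0.
  move=> r hr.
  have hy : P' (Y (b1 r) (b2 r)).
    have := Plin sP' 1 (- a2 r) (Podd sP' hr) hx.
    by congr P'; apply: eqR; rewrite /= ?(F1 _ hr); ring.
  move: hy; rewrite /P' /= /Y th_od !ap100 !ap200 => hy.
  case: hq => [hq|hq0].
    apply/eqP/negP => /negP hb; apply: nky.
    apply: (spanY sP hq hy); have := ap_sy (gx q1 q2) 1 0 (b1 r) (b2 r).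
    by rewrite gx_col1 gx_col2 d1 mul1r => ->; rewrite /sy mul1r mul0r subr0.
  have [e1 e2] := hq0 _ _ hy; by have [_ ->] := ap_inj d1 e1 e2.
exists (idA F), (Ordinal (isT : (3 < 4)%N)) => r hr /=.
exact: (finish3 h2 sP' hx F1 F2 hr).
Qed.

End P6.

Section P7.
Variable F : fieldType.
Hypothesis h2 : (2%:R : F) != 0.
Hypothesis h3 : (3%:R : F) != 0.
Local Notation R := (R F).
Let n4' := n4 h2. Let n8' := n8 h2. Let n16' := n16 h2.
Ltac fs7 := field; rewrite ?n4' ?n8' ?n16' ?h2 ?h3.

Lemma caseE (P : R -> Prop) : subR P ->
  (forall v1 v2, P (X v1 v2) -> v1 = 0 /\ v2 = 0) ->
  (forall v1 v2, P (Y v1 v2) -> v1 = 0 /\ v2 = 0) ->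
  forall r0, P r0 -> nz (a1 r0) (a2 r0) \/ nz (b1 r0) (b2 r0) -> Concl P.
Proof.
move=> sP nX nY r0 hr0 hn.
have ho := Podd sP hr0.
have na : nz (a1 r0) (a2 r0).
  case: (boolP (nz (a1 r0) (a2 r0))) => // /negP ha; exfalso.
  have [e1 e2] := nzP ha.
  have : P (Y (b1 r0) (b2 r0)) by move: ho; rewrite /oddR e1 e2.
  case/nY => e3 e4; case: hn; by rewrite /nz ?e1 ?e2 ?e3 ?e4 eqxx.
have nb : nz (b1 r0) (b2 r0).
  case: (boolP (nz (b1 r0) (b2 r0))) => // /negP hb; exfalso.
  have [e1 e2] := nzP hb.
  have : P (X (a1 r0) (a2 r0)) by move: ho; rewrite /oddR e1 e2.
  case/nX => e3 e4; case: hn; by rewrite /nz ?e1 ?e2 ?e3 ?e4 eqxx.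
have d1 := gx_det nb; have d2 := gy_det na.
apply: (Concl_conj (f := thA h2 d1 d2)).
have sP' := subR_conj (thA h2 d1 d2) sP.
set P' := fun r => P (af (thA h2 d1 d2) r) in sP' *.
have hw : P' (od 0 1 1 0) by rewrite /P' /= th_od gy_col1 gy_col2 gx_col1 gx_col2.
have nY' : forall v1 v2, P' (Y v1 v2) -> v1 = 0 /\ v2 = 0.
  move=> v1 v2; rewrite /P' /= /Y th_od !ap100 !ap200 => hy.
  have [e1 e2] := nY _ _ hy; exact: ap_inj d1 e1 e2.
case: (classic (forall r, P' r -> a1 r = 0 /\ b2 r = 0)) => [H|H].
  exists (idA F), (Ordinal (isT : (3 < 4)%N)) => r hr /=.
  exact: (finish3 h2 sP' hw (fun r hr => (H r hr).1) (fun r hr => (H r hr).2) hr).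
have [r' [hr' hne]] : exists r', P' r' /\ ~ (a1 r' = 0 /\ b2 r' = 0).
  by apply: NNPP => hne; apply: H => r hr; apply: NNPP => hh; apply: hne; exists r.
have hu : P' (od (a1 r') 0 (b1 r' - a2 r') (b2 r')).
  have := Plin sP' 1 (- a2 r') (Podd sP' hr') hw.
  by congr P'; apply: eqR; rewrite /=; ring.
have hc : a1 r' != 0.
  apply/eqP => e; apply: hne; split => //.
  by move: hu; rewrite e => /nY' [].
pose t := (b1 r' - a2 r') / a1 r'. pose s := b2 r' / a1 r'.
have hz : P' (od 1 0 t s).
  have := PZ sP' (1 / a1 r') hu.
  by congr P'; apply: eqR; rewrite /= /t /s; field.
have hs : s = -1.
  have hQ := Plin sP' (- 8%:R) (-1) (PM sP' (PM sP' hw hz) hw) hw.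
  have e : addR (scaleR (- 8%:R) (mulR (mulR (od 0 1 1 0) (od 1 0 t s)) (od 0 1 1 0)))
              (scaleR (-1) (od 0 1 1 0)) = Y (- (s + 1)) 0.
    by apply: eqR; rewrite /mulR /= /h /sy; fs7.
  rewrite e in hQ; have [e1 _] := nY' _ _ hQ.
  by move/eqP: e1; rewrite oppr_eq0 addr_eq0 => /eqP.
pose A := mkM t 1 (-1) 0.
have dA : det2 A = 1 by rewrite /det2 /=; ring.
apply: (Concl_conj (f := thA h2 dA (I2_det F))).
have sP'' := subR_conj (thA h2 dA (I2_det F)) sP'.
exists (idA F), (Ordinal (isT : (1 < 4)%N)) => r hr /=.
apply: (finish1 h2 sP'' _ _ _ hr).
- have E : thR A (I2 F) (od 1 0 1 0) = od 1 0 t s.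
    by rewrite hs; apply: eqR; rewrite /thR /ap1 /ap2 /=; ring.
  by rewrite /= E.
- have E : thR A (I2 F) (od 0 1 0 1) = od 0 1 1 0.
    by apply: eqR; rewrite /thR /ap1 /ap2 /=; ring.
  by rewrite /= E.
move=> v1 v2; rewrite /= /Y th_od !ap100 !ap200 => hy.
have [e1 e2] := nY' _ _ hy; exact: ap_inj dA e1 e2.
Qed.

Lemma classify (P : R -> Prop) : subR P -> (exists r, ~ P r) -> Concl P.
Proof.
move=> sP hpr.
case: (classic (exists r, P r /\ (nz (a1 r) (a2 r) \/ nz (b1 r) (b2 r)))) =>
   [[r0 [hr0 hn]]|noodd]; last first.
  exists (idA F), (Ordinal (isT : (0 < 4)%N)) => r hr /=.
  have hh : ~ (nz (a1 r) (a2 r) \/ nz (b1 r) (b2 r)) by move=> hh; apply: noodd; exists r.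
  have [e1 e2] := nzP (fun x => hh (or_introl x)).
  have [e3 e4] := nzP (fun x => hh (or_intror x)).
  by split.
case: (classic (Kfull P)) => kx; first exact: caseA.
have sPp := subR_conj (phiA h2) sP.
have hpp := proper_conj (phiA h2) hpr.
case: (classic (K2full P)) => ky.
  apply: (Concl_conj (f := phiA h2)); apply: (caseA h2 h3 sPp hpp).
  by move=> v1 v2 /=; rewrite /X phi_od; apply: ky.
case: (classic (exists v1 v2, nz v1 v2 /\ P (X v1 v2))) => [[v1 [v2 [nv hv]]]|nox].
  exact: (caseC h2 sP kx ky nv hv).
case: (classic (exists v1 v2, nz v1 v2 /\ P (Y v1 v2))) => [[v1 [v2 [nv hv]]]|noy].
  apply: (Concl_conj (f := phiA h2)); apply: (caseC h2 sPp _ _ nv).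
  - by move=> kk; apply: ky => w1 w2; have := kk w1 w2; rewrite /= /X phi_od.
  - by move=> kk; apply: kx => w1 w2; have := kk w1 w2; rewrite /= /Y phi_od.
  - by rewrite /= /X phi_od.
apply: (caseE sP _ _ hr0 hn).
- by move=> v1 v2 hv; apply: nzP => hn'; apply: nox; exists v1, v2.
- by move=> v1 v2 hv; apply: nzP => hn'; apply: noy; exists v1, v2.
Qed.

End P7.

Section P8.
Variable F : fieldType.
Hypothesis h2 : (2%:R : F) != 0.
Hypothesis h3 : (3%:R : F) != 0.
Local Notation R := (R F).
Let n4' := n4 h2. Let n8' := n8 h2. Let n16' := n16 h2.
Ltac fs8 := field; rewrite ?n4' ?n8' ?n16' ?h2 ?h3.

Lemma LR1_phi (r : R) : LR 1 r <-> phiR r = r.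
Proof.
have := listedE h2 (Ordinal (isT : (1 < 4)%N)) r; rewrite /listed /= /sub_ii phiE.
move=> <-; split => [/toK_inj //|-> //].
Qed.

Lemma subL (k : 'I_4) : subR (@LR F k).
Proof.
case: k => [[|[|[|[|k]]]] Hk] //=.
- split.
  + by split.
  + by move=> [l m x1 x2 y1 y2 p q u w] [l' m' x1' x2' y1' y2' p' q' u' w'] /= [e1 e2 e3 e4] [f1 f2 f3 f4]; subst; split => /=; ring.
  + by move=> c [l m x1 x2 y1 y2 p q u w] /= [e1 e2 e3 e4]; subst; split => /=; ring.
  + by move=> [l m x1 x2 y1 y2 p q u w] /= [e1 e2 e3 e4]; subst.
  + by move=> [l m x1 x2 y1 y2 p q u w] [l' m' x1' x2' y1' y2' p' q' u' w'] /= [e1 e2 e3 e4] [f1 f2 f3 f4]; subst; split => /=; rewrite /h; ring.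
- split.
  + by apply/LR1_phi; apply: eqR; rewrite /= ?oppr0.
  + by move=> r s /LR1_phi e1 /LR1_phi e2; apply/LR1_phi; have /= -> := afD (phiA h2) r s; rewrite ?e1 ?e2.
  + by move=> c r /LR1_phi e1; apply/LR1_phi; have /= -> := afZ (phiA h2) c r; rewrite ?e1 ?e2.
  + by move=> r /LR1_phi e1; apply/LR1_phi; have /= -> := afE (phiA h2) r; rewrite ?e1 ?e2.
  + by move=> r s /LR1_phi e1 /LR1_phi e2; apply/LR1_phi; have /= -> := afM (phiA h2) r s; rewrite ?e1 ?e2.
- split.
  + by split.
  + by move=> [l m x1 x2 y1 y2 p q u w] [l' m' x1' x2' y1' y2' p' q' u' w'] /= [e1 e2 e3] [f1 f2 f3]; subst; split => /=; ring.
  + by move=> c [l m x1 x2 y1 y2 p q u w] /= [e1 e2 e3]; subst; split => /=; ring.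
  + by move=> [l m x1 x2 y1 y2 p q u w] /= [e1 e2 e3]; subst.
  + by move=> [l m x1 x2 y1 y2 p q u w] [l' m' x1' x2' y1' y2' p' q' u' w'] /= [e1 e2 e3] [f1 f2 f3]; subst; split => /=; rewrite /h; ring.
- split.
  + by split.
  + by move=> [l m x1 x2 y1 y2 p q u w] [l' m' x1' x2' y1' y2' p' q' u' w'] /= [e1 e2 e3] [f1 f2 f3]; subst; split => /=; ring.
  + by move=> c [l m x1 x2 y1 y2 p q u w] /= [e1 e2 e3]; subst; split => /=; ring.
  + by move=> [l m x1 x2 y1 y2 p q u w] /= [e1 e2 e3]; subst.
  + by move=> [l m x1 x2 y1 y2 p q u w] [l' m' x1' x2' y1' y2' p' q' u' w'] /= [e1 e2 e3] [f1 f2 f3]; subst; split => /=; rewrite /h; ring.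
Qed.

Lemma properL (k : 'I_4) : exists r : R, ~ LR k r.
Proof.
case: k => [[|[|[|[|k]]]] Hk] //=.
- by exists (X 1 0); case => /eqP; rewrite oner_eq0.
- by exists (X 1 0); case => /eqP; rewrite oner_eq0.
- by exists (Y 0 1); case => /eqP; rewrite oner_eq0.
- by exists (X 1 0); case => /eqP; rewrite oner_eq0.
Qed.

End P8.

Section P9.
Variable F : fieldType.
Hypothesis h2 : (2%:R : F) != 0.
Hypothesis h3 : (3%:R : F) != 0.
Local Notation R := (R F).
Let n4' := n4 h2. Let n8' := n8 h2. Let n16' := n16 h2.
Ltac fs9 := field; rewrite ?n4' ?n8' ?n16' ?h2 ?h3 ?andbT ?andTb; repeat (apply/andP; split).

Definition MaxC (k : nat) := forall P : R -> Prop, subR P -> (forall r, LR k r -> P r) ->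
  (forall r, P r -> LR k r) \/ (forall r, P r).

Lemma nz1 (c1 c2 : F) : nz c1 c2 -> c1 = 0 -> c2 != 0.
Proof. by rewrite /nz => hn e; rewrite e eqxx in hn. Qed.
Lemma nz2 (c1 c2 : F) : nz c1 c2 -> c2 = 0 -> c1 != 0.
Proof. by rewrite /nz => hn e; rewrite e eqxx orbF in hn. Qed.

Lemma max0 : MaxC 0.
Proof.
move=> P sP hL.
have ev : forall l m p q u w, P (mkR l m 0 0 0 0 p q u w) by move=> *; apply: hL.
have fromX : forall c1 c2, nz c1 c2 -> P (X c1 c2) -> K2full P.
  move=> c1 c2 nc hx v1 v2; case: (eqVneq c1 0) => [e|hc].
    have hc2 := nz1 nc e; subst c1.
    have := PM sP (ev 0 0 (v1 / (h F * c2)) 0 (v2 / (h F * c2)) 0) hx.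
    by congr P; apply: eqR; rewrite /mulR /= /h /sy; fs9.
  have := PM sP (ev 0 0 0 (- v1 / (h F * c1)) 0 (- v2 / (h F * c1))) hx.
  by congr P; apply: eqR; rewrite /mulR /= /h /sy; fs9.
have fromY : forall d1 d2, nz d1 d2 -> P (Y d1 d2) -> Kfull P.
  move=> d1 d2 nd hy v1 v2; case: (eqVneq d2 0) => [e|hd].
    have hd1 := nz2 nd e; subst d2.
    have := PM sP (ev 0 0 0 0 (v1 / (h F * d1)) (v2 / (h F * d1))) hy.
    by congr P; apply: eqR; rewrite /mulR /= /h /sy; fs9.
  have := PM sP (ev 0 0 (- v1 / (h F * d2)) (- v2 / (h F * d2)) 0 0) hy.
  by congr P; apply: eqR; rewrite /mulR /= /h /sy; fs9.
case: (classic (exists r, P r /\ (nz (a1 r) (a2 r) \/ nz (b1 r) (b2 r)))) =>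
   [[r0 [hr0 hn]]|noodd]; last first.
  left => r hr.
  have hh : ~ (nz (a1 r) (a2 r) \/ nz (b1 r) (b2 r)) by move=> hh; apply: noodd; exists r.
  have [e1 e2] := nzP (fun x => hh (or_introl x)).
  have [e3 e4] := nzP (fun x => hh (or_intror x)).
  by split.
right; have ho := Podd sP hr0.
have nz10 : nz (1 : F) 0 by rewrite /nz oner_eq0.
have [[c1 [c2 [nc hc]]]|[d1 [d2 [nd hd]]]] :
   (exists c1 c2, nz c1 c2 /\ P (X c1 c2)) \/ (exists d1 d2, nz d1 d2 /\ P (Y d1 d2)).
    case: (boolP (nz (a1 r0) (a2 r0))) => ha.
    left; exists (a1 r0), (a2 r0); split => //.
    case: (boolP (nz (b1 r0) (b2 r0))) => hb; last first.
      have [e1 e2] := nzP (negP hb); by move: ho; rewrite /oddR e1 e2.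
    case: (eqVneq (b2 r0) 0) => [e|hb2].
      have hb1 := nz2 hb e.
      have := PZ sP (1 / (h F * b1 r0)) (PM sP (ev 0 0 0 0 (a1 r0) (a2 r0)) ho).
      by congr P; apply: eqR; rewrite /mulR /= /h /sy ?e; fs9.
    have := PZ sP (- 1 / (h F * b2 r0)) (PM sP (ev 0 0 (a1 r0) (a2 r0) 0 0) ho).
    by congr P; apply: eqR; rewrite /mulR /= /h /sy; fs9.
  right; exists (b1 r0), (b2 r0); split.
    by case: hn => // hh; rewrite hh in ha.
  have [e1 e2] := nzP (negP ha); by move: ho; rewrite /oddR e1 e2.
- have ky := fromX _ _ nc hc; have kx := fromY _ _ nz10 (ky 1 0).
  exact: (Pall h2 h3 sP kx ky).
- have kx := fromY _ _ nd hd; have ky := fromX _ _ nz10 (kx 1 0).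
  exact: (Pall h2 h3 sP kx ky).
Qed.


Lemma max1 : MaxC 1.
Proof.
move=> P sP hL.
have hod : forall v1 v2, P (od v1 v2 v1 v2) by move=> v1 v2; apply: hL; split; rewrite /= ?oppr0.
have hxx := hod 1 0. have hyy := hod 0 1.
case: (classic (exists q1 q2, nz q1 q2 /\ P (Y q1 q2))) => [[q1 [q2 [nq hq]]]|noq]; last first.
  left => r hr; apply: (finish1 h2 sP hxx hyy _ hr).
  by move=> v1 v2 hv; apply: nzP => hn; apply: noq; exists v1, v2.
right.
have hT : forall p1 p2, P (mkR 0 0 0 0 0 0 (q1 * p1) (q1 * p2) (q2 * p1) (q2 * p2)).
  move=> p1 p2.
  have hs : P (mkR (- (3%:R / 8%:R) * sy q1 q2 p1 p2) (sy q1 q2 p1 p2) 0 0 0 0 0 0 0 0).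
    by apply: hL; split; rewrite /= ?oppr0.
  have := Plin sP 4%:R (- 4%:R) (PM sP hq (hod p1 p2)) hs.
  by congr P; apply: eqR; rewrite /mulR /= /h /sy; fs9.
have kx : Kfull P.
  move=> p1 p2; case: (eqVneq q2 0) => [e|hq2].
    have hq1 := nz2 nq e; subst q2.
    have := Plin sP (- 1 / (h F * q1)) (p1 / q1) (PM sP (hT p1 p2) hyy) hq.
    by congr P; apply: eqR; rewrite /mulR /= /h /sy; fs9.
  have := Plin sP (1 / (h F * q2)) (p2 / q2) (PM sP (hT p1 p2) hxx) hq.
  by congr P; apply: eqR; rewrite /mulR /= /h /sy; fs9.
have ky : K2full P.
  move=> v1 v2; have := Plin sP 1 (-1) (hod v1 v2) (kx v1 v2).
  by congr P; apply: eqR; rewrite /=; ring.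
exact: (Pall h2 h3 sP kx ky).
Qed.


Lemma max2 : MaxC 2.
Proof.
move=> P sP hL.
have kx : Kfull P by move=> v1 v2; apply: hL.
have hy : P (Y 1 0) by apply: hL.
case: (classic (K2full P)) => [ky|nky]; first by right; exact: (Pall h2 h3 sP kx ky).
left => r hr; apply: (finish2 h2 sP (kx 1 0) (kx 0 1) _ hr).
move=> r' hr'; apply/eqP/negP => /negP hb; apply: nky.
apply: (spanY sP hy (A1 h2 sP (kx 1 0) (kx 0 1) hr')).
by rewrite /sy mul1r mul0r subr0.
Qed.

Lemma max3 : MaxC 3.
Proof.
move=> P sP hL.
have hx : P (X 0 1) by apply: hL.
have hy : P (Y 1 0) by apply: hL.
have E11 : P (mkR 0 0 0 0 0 0 1 0 0 0) by apply: hL.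
have E22 : P (mkR 0 0 0 0 0 0 0 0 0 1) by apply: hL.
have kxy : Kfull P -> K2full P.
  move=> kx; apply: (spanY sP hy (w1 := 0) (w2 := 1)).
    have := PZ sP (- 2%:R) (PM sP E22 (kx 1 0)).
    by congr P; apply: eqR; rewrite /mulR /= /h /sy; fs9.
  by rewrite /sy mul1r mul0r subr0 oner_eq0.
have kyx : K2full P -> Kfull P.
  move=> ky; apply: (spanX sP (u1 := 1) (u2 := 0) _ hx).
    have := PZ sP (- 2%:R) (PM sP E11 (ky 0 1)).
    by congr P; apply: eqR; rewrite /mulR /= /h /sy; fs9.
  by rewrite /sy mul1r mul0r subr0 oner_eq0.
case: (classic (Kfull P \/ K2full P)) => [[kx|ky]|nk].
- by right; exact: (Pall h2 h3 sP kx (kxy kx)).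
- by right; exact: (Pall h2 h3 sP (kyx ky) ky).
left.
have Fa : forall r, P r -> a1 r = 0.
  move=> r hr; apply/eqP/negP => /negP hc; apply: nk; left.
  have hQ : P (X (a1 r * a1 r) (a1 r * a2 r)).
    have := PZ sP (- 8%:R) (PM sP (PM sP hx (Podd sP hr)) (Podd sP hr)).
    by congr P; apply: eqR; rewrite /mulR /= /h /sy; fs9.
  apply: (spanX sP hx hQ).
  by rewrite /sy mul0r sub0r mul1r oppr_eq0 mulf_neq0.
have Fb : forall r, P r -> b2 r = 0.
  move=> r hr; apply/eqP/negP => /negP hb; apply: nk; right.
  have hyb : P (Y (b1 r) (b2 r)).
    have := Plin sP 1 (- a2 r) (Podd sP hr) hx.
    by congr P; apply: eqR; rewrite /= ?(Fa _ hr); ring.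
  apply: (spanY sP hy hyb).
  by rewrite /sy mul1r mul0r subr0.
move=> r hr; exact: (finish3 h2 sP hx Fa Fb hr).
Qed.

End P9.

Section P10.
Variable F : fieldType.
Hypothesis h2 : (2%:R : F) != 0.
Hypothesis h3 : (3%:R : F) != 0.
Local Notation R := (R F).

Lemma subR_ext (P Q : R -> Prop) : (forall r, P r <-> Q r) -> subR P -> subR Q.
Proof.
move=> e [s0 sD sZ sE sM]; split.
- by apply/e.
- by move=> r s /e hr /e hs; apply/e; apply: sD.
- by move=> c r /e hr; apply/e; apply: sZ.
- by move=> r /e hr; apply/e; apply: sE.
- by move=> r s /e hr /e hs; apply/e; apply: sM.
Qed.

Lemma maxAll (k : 'I_4) : MaxC F k.
Proof.
case: k => [[|[|[|[|k]]]] Hk] //=.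
- exact: (max0 h2 h3).
- exact: (max1 h2 h3).
- exact: (max2 h2 h3).
- exact: (max3 h2 h3).
Qed.

Lemma part1 (k : 'I_4) : is_maximal_subalgebra (listed F k).
Proof.
split.
- apply/(subK h2); apply: (subR_ext (P := @LR F k)); last exact: (subL h2 k).
  by move=> r; rewrite (listedE h2).
- have [r hr] := properL F k; exists (toK r); by rewrite (listedE h2).
move=> T /(subK h2) sT hT.
have hL : forall r, LR k r -> T (toK r) by move=> r /(listedE h2) /hT.
case: (maxAll sT hL) => [H|H]; [left|right] => u; rewrite -(toK_ofK u).
  by move/H; rewrite (listedE h2).
exact: H.
Qed.

Definition invA (f : autR F) : autR F.
Proof.
refine (@AutR F (ag f) (af f) (agK f) (afK f) _ _ _ _).
- by move=> r s; apply: (can_inj (afK f)); rewrite afD !agK.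
- by move=> c r; apply: (can_inj (afK f)); rewrite afZ !agK.
- by move=> r; apply: (can_inj (afK f)); rewrite afE !agK.
- by move=> r s; apply: (can_inj (afK f)); rewrite afM !agK.
Defined.

Lemma part2 (S : kset F) : is_maximal_subalgebra S ->
  exists g : K10 F -> K10 F, is_automorphism g /\
     exists k : 'I_4, same_set S (aut_image g (listed F k)).
Proof.
case=> sS [u0 hu0] hmax.
have sP := (subK h2 S).1 sS.
have hp : exists r, ~ S (toK r) by exists (ofK u0); rewrite toK_ofK.
have [f [k H]] := classify h2 h3 sP hp.
exists (liftA f); split; first exact: (liftA_aut h2).
exists k.
set T := aut_image (liftA f) (listed F k).
have TE : forall r, T (toK r) <-> LR k (ag f r).
  move=> r; split.
    case=> v hv; rewrite /liftA => /toK_inj ->; rewrite afK.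
    by apply/(listedE h2); rewrite toK_ofK.
  move=> hr; exists (toK (ag f r)); first by apply/(listedE h2).
  by rewrite /liftA ofK_toK agK.
have incl : forall u, S u -> T u.
  move=> u hu; rewrite -(toK_ofK u); apply/TE; apply: H; by rewrite toK_ofK.
have sT : is_subalgebra T.
  apply/(subK h2); apply: (subR_ext (P := fun r => LR k (af (invA f) r))).
    by move=> r; rewrite TE; apply: iff_refl.
  exact: subR_conj (subL h2 k).
case: (hmax T sT incl) => [HT|HT].
  by move=> u; split; [exact: incl | exact: HT].
exfalso; have [rb hrb] := properL F k; apply: hrb.
have := (TE (af f rb)).1 (HT _); by rewrite afK.
Qed.

End P10.

Theorem corollary4p2 (F : closedFieldType)
  (char2 : (2 \notin [pchar F])%N) (char3 : (3 \notin [pchar F])%N) :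
  (forall k : 'I_4, is_maximal_subalgebra (listed F k)) /\
  (forall S : kset F, is_maximal_subalgebra S ->
     exists g : K10 F -> K10 F, is_automorphism g /\
       exists k : 'I_4, same_set S (aut_image g (listed F k))).
Proof.
have h2 : (2%:R : F) != 0.
  by apply/negP => e; move: char2; rewrite inE /= e.
have h3 : (3%:R : F) != 0.
  by apply/negP => e; move: char3; rewrite inE /= e.
split; [exact: part1 | exact: part2].
Qed.
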